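(* The reductions $\to_{ym}$, $\to_{yeAY}$ and $\to_{yeYN}$ are deterministic, and $\to_{ygcv}$ is diamond.
   Context: Terms: $t ::= x \mid \lambda x.t \mid t\,u \mid t[x\backslash u]$ ($t[x\backslash u]$ an explicit substitution binding $x$ in $t$; terms up to $\alpha$). Values $v ::= \lambda x.t$. Substitution contexts $S ::= \langle\cdot\rangle\mid S[x\backslash u]$. For a class of contexts $K$, $K\langle\langle t\rangle\rangle$ is plugging without capture of free variables of $t$. Root rules: $S\langle\lambda x.t\rangle u\mapsto_m S\langle t[x\backslash u]\rangle$; $K\langle\langle x\rangle\rangle[x\backslash u]\mapsto_{e_K} K\langle\langle u\rangle\rangle[x\backslash u]$ ($K$ ranging over the class of contexts); $t[x\backslash S\langle v\rangle]\mapsto_{gcv} S\langle t\rangle$ if $x\notin\mathrm{fv}(t)$. Answers $a ::= v\mid a[x\backslash a']$; name contexts $N ::= \langle\cdot\rangle\mid N t\mid N[x\backslash t]$; auxiliary contexts $A ::= \langle\cdot\rangle\mid a[x\backslash A]\mid A[x\backslash t]$; silly contexts $Y ::= A\langle N\rangle$. $\to_{ym} := Y\langle\mapsto_m\rangle$; $\to_{yeAY} := A\langle\mapsto_{e_Y}\rangle$; $\to_{yeYN} := Y\langle\mapsto_{e_N}\rangle$; $\to_{ygcv}:=Y\langle\mapsto_{gcv}\rangle$. Deterministic: each term has at most one reduct. Diamond: if $u_1\leftarrow t\to u_2$ then $u_1=u_2$ or there is $s$ with $u_1\to s\leftarrow u_2$. *)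

(* Defs.v *)
(* Terms with explicit substitutions in de Bruijn notation
   (terms up to alpha-equivalence = syntactic equality of de Bruijn terms). *)
From Stdlib Require Import Arith.

(* t ::= x | \x.t | t u | t[x\u].
   ES t u represents t[x\u]; x is index 0 in t (ES binds in its body t). *)
Inductive term : Type :=
| Var : nat -> term
| Lam : term -> term
| App : term -> term -> term
| ES  : term -> term -> term.

Fixpoint shift (d c : nat) (t : term) : term :=
  match t with
  | Var n => if Nat.leb c n then Var (n + d) else Var n
  | Lam b => Lam (shift d (S c) b)
  | App t1 t2 => App (shift d c t1) (shift d c t2)
  | ES t1 t2 => ES (shift d (S c) t1) (shift d c t2)
  end.

Inductive ctx : Type :=
| Hole : ctx
| CLam : ctx -> ctx
| CAppL : ctx -> term -> ctx
| CAppR : term -> ctx -> ctx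
| CESL : ctx -> term -> ctx
| CESR : term -> ctx -> ctx.

Fixpoint plug (c : ctx) (s : term) : term :=
  match c with
  | Hole => s
  | CLam c' => Lam (plug c' s)
  | CAppL c' t => App (plug c' s) t
  | CAppR t c' => App t (plug c' s)
  | CESL c' t => ES (plug c' s) t
  | CESR t c' => ES t (plug c' s)
  end.

Fixpoint depth (c : ctx) : nat :=
  match c with
  | Hole => 0
  | CLam c' => S (depth c')
  | CAppL c' _ => depth c'
  | CAppR _ c' => depth c'
  | CESL c' _ => S (depth c')
  | CESR _ c' => depth c'
  end.

Fixpoint ccomp (c1 c2 : ctx) : ctx :=
  match c1 with
  | Hole => c2
  | CLam c' => CLam (ccomp c' c2)
  | CAppL c' t => CAppL (ccomp c' c2) t
  | CAppR t c' => CAppR t (ccomp c' c2)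
  | CESL c' t => CESL (ccomp c' c2) t
  | CESR t c' => CESR t (ccomp c' c2)
  end.

Definition is_value (v : term) : Prop := exists b, v = Lam b.

Inductive is_S : ctx -> Prop :=
| S_hole : is_S Hole
| S_es : forall s u, is_S s -> is_S (CESL s u).

Inductive is_answer : term -> Prop :=
| ans_val : forall b, is_answer (Lam b)
| ans_es : forall a a', is_answer a -> is_answer a' -> is_answer (ES a a').

Inductive is_N : ctx -> Prop :=
| N_hole : is_N Hole
| N_app : forall n t, is_N n -> is_N (CAppL n t)
| N_es : forall n t, is_N n -> is_N (CESL n t).

Inductive is_A : ctx -> Prop :=
| A_hole : is_A Hole
| A_arg : forall a c, is_answer a -> is_A c -> is_A (CESR a c)
| A_es : forall c t, is_A c -> is_A (CESL c t).

Definition is_Y (c : ctx) : Prop :=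
  exists a n, is_A a /\ is_N n /\ c = ccomp a n.

(* S<\x.t> u |->m S<t[x\u]>  (u placed under S without capture) *)
Definition root_m (r r' : term) : Prop :=
  exists s b u, is_S s /\
    r = App (plug s (Lam b)) u /\
    r' = plug s (ES b (shift (depth s) 0 u)).

(* K<<x>>[x\u] |->eK K<<u>>[x\u] *)
Definition root_e (K : ctx -> Prop) (r r' : term) : Prop :=
  exists k u, K k /\
    r = ES (plug k (Var (depth k))) u /\
    r' = ES (plug k (shift (S (depth k)) 0 u)) u.

(* t[x\S<v>] |->gcv S<t>  if x notin fv(t): t is written as shift 1 0 t0 *)
Definition root_gcv (r r' : term) : Prop :=
  exists t0 s v, is_S s /\ is_value v /\
    r = ES (shift 1 0 t0) (plug s v) /\
    r' = plug s (shift (depth s) 0 t0).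

Definition closure (C : ctx -> Prop) (R : term -> term -> Prop) (t t' : term) : Prop :=
  exists c r r', C c /\ R r r' /\ t = plug c r /\ t' = plug c r'.

Definition ym := closure is_Y root_m.
Definition yeAY := closure is_A (root_e is_Y).
Definition yeYN := closure is_Y (root_e is_N).
Definition ygcv := closure is_Y root_gcv.

Definition deterministic (R : term -> term -> Prop) : Prop :=
  forall t u1 u2, R t u1 -> R t u2 -> u1 = u2.

Definition diamond (R : term -> term -> Prop) : Prop :=
  forall t u1 u2, R t u1 -> R t u2 ->
    u1 = u2 \/ exists s, R u1 s /\ R u2 s.

(* Main.v *)
Require Import Defs.
From Stdlib Require Import Arith Lia.

Ltac var_tac :=
  repeat (simpl; match goal with
                 | |- context [Nat.leb ?a ?b] => destruct (Nat.leb_spec a b)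
                 | |- context [match ?n with 0 => false | S _ => _ end] => destruct n
                 end);
  try (f_equal; lia); try lia.

Lemma shift_comm : forall t d k j c, j <= c ->
  shift d (c + k) (shift k j t) = shift k j (shift d c t).
Proof.
  induction t; intros d k j c Hjc; simpl.
  - destruct (Nat.leb_spec j n); destruct (Nat.leb_spec c n); var_tac.
  - f_equal. apply (IHt d k (S j) (S c)). lia.
  - f_equal; auto.
  - f_equal; [apply (IHt1 d k (S j) (S c)); lia | auto].
Qed.

Lemma shift_merge : forall t d k j c, j <= c -> c <= j + k ->
  shift d c (shift k j t) = shift (d + k) j t.
Proof.
  induction t; intros d k j c H1 H2; simpl.
  - destruct (Nat.leb_spec j n); var_tac.
  - f_equal. apply IHt; lia.
  - f_equal; auto.
  - f_equal; [apply IHt1; lia | auto].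
Qed.

Lemma shift_inj : forall a b d c, shift d c a = shift d c b -> a = b.
Proof.
  induction a; destruct b; intros d c E; simpl in E;
    repeat match goal with
           | H : context [Nat.leb ?a ?b] |- _ => destruct (Nat.leb_spec a b)
           | H : context [match ?n with 0 => false | S _ => _ end] |- _ => destruct n
           end; try discriminate; injection E; intros; subst; f_equal; eauto; try lia.
Qed.

Lemma shift_inv : forall a d c k t, k <= c -> shift d (S c) a = shift 1 k t ->
  exists a0, a = shift 1 k a0 /\ t = shift d c a0.
Proof.
  induction a; intros d c k t Hk E; destruct t; simpl in E;
    repeat match goal with
           | H : context [Nat.leb ?a ?b] |- _ => destruct (Nat.leb_spec a b)
           | H : context [match ?n with 0 => false | S _ => _ end] |- _ => destruct n
           end; try discriminate; try (injection E; intros; subst).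
  all: try match goal with |- exists a0, Var ?x = _ /\ Var ?y = _ => solve [exists (Var x); split; var_tac | exists (Var y); split; var_tac | exists (Var (x-1)); split; var_tac | lia] end.
  all: try lia.
  - destruct (IHa d (S c) (S k) t) as [a0 [-> ->]]; [lia|eassumption|].
    exists (Lam a0); auto.
  - destruct (IHa1 d c k t1) as [a0 [-> ->]]; auto.
    destruct (IHa2 d c k t2) as [b0 [-> ->]]; auto.
    exists (App a0 b0); auto.
  - destruct (IHa1 d (S c) (S k) t1) as [a0 [-> ->]]; [lia|eassumption|].
    destruct (IHa2 d c k t2) as [b0 [-> ->]]; auto.
    exists (ES a0 b0); auto.
Qed.

Fixpoint shiftc (d c : nat) (k : ctx) : ctx :=
  match k with
  | Hole => Hole
  | CLam k' => CLam (shiftc d (S c) k')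
  | CAppL k' t => CAppL (shiftc d c k') (shift d c t)
  | CAppR t k' => CAppR (shift d c t) (shiftc d c k')
  | CESL k' t => CESL (shiftc d (S c) k') (shift d c t)
  | CESR t k' => CESR (shift d (S c) t) (shiftc d c k')
  end.

Lemma shift_plug : forall k d c x,
  shift d c (plug k x) = plug (shiftc d c k) (shift d (c + depth k) x).
Proof.
  induction k; intros d c x; simpl.
  - rewrite Nat.add_0_r; reflexivity.
  - rewrite IHk. do 3 f_equal. lia.
  - rewrite IHk; auto.
  - rewrite IHk; auto.
  - rewrite IHk. do 3 f_equal. lia.
  - rewrite IHk; auto.
Qed.

Lemma depth_shiftc : forall k d c, depth (shiftc d c k) = depth k.
Proof. induction k; intros; simpl; auto. Qed.

Lemma S_shiftc : forall s d c, is_S s -> is_S (shiftc d c s).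
Proof. intros s d c H; revert c; induction H; intros; simpl; constructor; auto. Qed.

Lemma plug_ccomp : forall a c t, plug (ccomp a c) t = plug a (plug c t).
Proof. induction a; intros; simpl; f_equal; auto. Qed.

Lemma depth_ccomp : forall a c, depth (ccomp a c) = depth a + depth c.
Proof. induction a; intros; simpl; auto. Qed.

Lemma S_ccomp : forall a c, is_S a -> is_S c -> is_S (ccomp a c).
Proof. intros a c H; induction H; intros; simpl; try constructor; auto. Qed.

Lemma ans_shift : forall a d c, is_answer a -> is_answer (shift d c a).
Proof. intros a d c H; revert c; induction H; intros; simpl; constructor; auto. Qed.

Lemma ans_shift_inv : forall a d c, is_answer (shift d c a) -> is_answer a.
Proof.
  induction a; intros d c H; simpl in H.
  - destruct (Nat.leb c n); inversion H.
  - constructor.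
  - inversion H.
  - inversion H; subst; constructor; eauto.
Qed.

Lemma ansS1 : forall s x, is_S s -> is_answer (plug s x) -> is_answer x.
Proof. intros s x H; induction H; simpl; intros; auto. inversion H0; auto. Qed.

Lemma ansS2 : forall s x y, is_S s -> is_answer (plug s x) -> is_answer y -> is_answer (plug s y).
Proof. intros s x y H; induction H; simpl; intros; auto. inversion H0; subst; constructor; auto. Qed.

Lemma S_uniq : forall s s' x y, is_S s -> is_S s' -> plug s x = plug s' y ->
  is_value x -> is_value y -> s = s' /\ x = y.
Proof.
  intros s s' x y H; revert s'; induction H; intros s' H' E Hx Hy; inversion H'; subst; simpl in E.
  - auto.
  - destruct Hx as [b ->]; discriminate.
  - destruct Hy as [b ->]; discriminate.
  - injection E; intros; subst. destruct (IHis_S s0) as [-> ->]; auto.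
Qed.

Lemma shift_plug_inv_S : forall s, is_S s -> forall d c w v, shift d c w = plug s v -> is_value v ->
  exists s0 v0, is_S s0 /\ s = shiftc d c s0 /\ w = plug s0 v0 /\
                v = shift d (c + depth s0) v0 /\ is_value v0.
Proof.
  intros s H; induction H; intros d c w v E Hv; simpl in E.
  - destruct Hv as [b ->]. destruct w; simpl in E;
      try (destruct (Nat.leb c n)); try discriminate.
    exists Hole, (Lam w). simpl. rewrite Nat.add_0_r. repeat split; auto. constructor. eexists; eauto.
  - destruct w; simpl in E; try (destruct (Nat.leb c n)); try discriminate.
    injection E; intros E2 E1.
    destruct (IHis_S d (S c) w1 v E1 Hv) as (s0 & v0 & Hs0 & -> & -> & -> & Hv0).
    exists (CESL s0 w2), v0. simpl. repeat split; auto.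
    + constructor; auto.
    + rewrite E2; auto.
    + f_equal. lia.
Qed.

Inductive mode := MA | MY | MN.

Inductive st (R : term -> term -> Prop) : mode -> term -> term -> Prop :=
| st_base : forall m t t', R t t' -> st R m t t'
| st_esl : forall m t t' u, st R m t t' -> st R m (ES t u) (ES t' u)
| st_esr : forall m a t t', m <> MN -> is_answer a -> st R m t t' -> st R m (ES a t) (ES a t')
| st_app : forall m t t' u, m <> MA -> st R MN t t' -> st R m (App t u) (App t' u).

Inductive ctxm : mode -> ctx -> Prop :=
| cm_hole : forall m, ctxm m Hole
| cm_esl : forall m c t, ctxm m c -> ctxm m (CESL c t)
| cm_esr : forall m a c, m <> MN -> is_answer a -> ctxm m c -> ctxm m (CESR a c)
| cm_app : forall m c t, m <> MA -> ctxm MN c -> ctxm m (CAppL c t).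

Lemma st_plug : forall R m c r r', ctxm m c -> R r r' -> st R m (plug c r) (plug c r').
Proof.
  intros R m c r r' H; induction H; intros; simpl.
  - constructor; auto.
  - apply st_esl; auto.
  - apply st_esr; auto.
  - apply st_app; auto.
Qed.

Lemma st_ctx : forall R m t t', st R m t t' ->
  exists c r r', ctxm m c /\ R r r' /\ t = plug c r /\ t' = plug c r'.
Proof.
  intros R m t t' H; induction H.
  - exists Hole, t, t'; repeat split; auto; constructor.
  - destruct IHst as (c & r & r' & Hc & Hr & -> & ->).
    exists (CESL c u), r, r'; repeat split; auto; constructor; auto.
  - destruct IHst as (c & r & r' & Hc & Hr & -> & ->).
    exists (CESR a c), r, r'; repeat split; auto; constructor; auto.
  - destruct IHst as (c & r & r' & Hc & Hr & -> & ->).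
    exists (CAppL c u), r, r'; repeat split; auto; constructor; auto.
Qed.

Lemma N_ctxm : forall n, is_N n -> ctxm MN n.
Proof. intros n H; induction H; constructor; auto; discriminate. Qed.

Lemma A_ctxm : forall n, is_A n -> ctxm MA n.
Proof. intros n H; induction H; constructor; auto; discriminate. Qed.

Lemma ctxm_N : forall c, ctxm MN c -> is_N c.
Proof.
  intros c H; remember MN as m; induction H; subst; try constructor; auto.
  all: try congruence.
Qed.

Lemma ctxm_MY : forall m c, ctxm m c -> ctxm MY c.
Proof. intros m c H; induction H; constructor; auto; discriminate. Qed.

Lemma ctxm_MN_up : forall c m, ctxm MN c -> m <> MA -> ctxm m c.
Proof.
  intros c m H; remember MN as m0; revert m; induction H; intros; subst; try constructor; auto.
  all: try congruence.
Qed.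

Lemma ccomp_A : forall a c m, ctxm MA a -> ctxm m c -> m <> MN -> ctxm m (ccomp a c).
Proof.
  intros a c m H; remember MA as m0; induction H; intros; subst; simpl; try constructor; auto.
  all: try congruence.
Qed.

Lemma ccomp_N : forall c n m, ctxm m c -> m <> MA -> ctxm MN n -> ctxm m (ccomp c n).
Proof.
  intros c n m H; induction H; intros; simpl.
  - apply ctxm_MN_up; auto.
  - constructor; auto.
  - constructor; auto.
  - constructor; auto. apply IHctxm; auto. discriminate.
Qed.

Lemma Y_ctxm : forall c, is_Y c -> ctxm MY c.
Proof.
  intros c (a & n & Ha & Hn & ->).
  apply ccomp_A; [apply A_ctxm; auto | apply ctxm_MN_up; [apply N_ctxm; auto| discriminate] | discriminate].
Qed.

Lemma ctxm_Y : forall c, ctxm MY c -> is_Y c.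
Proof.
  intros c H; remember MY as m; induction H; subst.
  - exists Hole, Hole; repeat split; constructor.
  - destruct IHctxm as (a & n & Ha & Hn & ->); auto.
    exists (CESL a t), n; repeat split; auto; constructor; auto.
  - destruct IHctxm as (a' & n & Ha & Hn & ->); auto.
    exists (CESR a a'), n; repeat split; auto; constructor; auto.
  - exists Hole, (CAppL c t); repeat split; try constructor; apply ctxm_N; auto.
Qed.

Lemma not_ans_var : forall m k i, ctxm m k -> ~ is_answer (plug k (Var i)).
Proof.
  intros m k i H; induction H; simpl; intro Ha; inversion Ha; subst; auto.
Qed.

Lemma var_uniq : forall k m k' i j, ctxm m k -> ctxm m k' ->
  plug k (Var i) = plug k' (Var j) -> k = k' /\ i = j.
Proof.
  induction k; intros m k' i j Hk Hk' E; inversion Hk; subst;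
    destruct k'; simpl in E; try discriminate; inversion Hk'; subst.
  - injection E; intros; subst; auto.
  - injection E; intros; subst. destruct (IHk MN k' i j) as [-> ->]; auto.
  - injection E; intros; subst. destruct (IHk m k' i j) as [-> ->]; auto.
  - injection E; intros; subst. exfalso; match goal with H : is_answer (plug ?k (Var ?i)) |- _ => apply (not_ans_var m k i); auto end.
  - injection E; intros; subst. exfalso; match goal with H : is_answer (plug ?k (Var ?i)) |- _ => apply (not_ans_var m k i); auto end.
  - injection E; intros; subst. destruct (IHk m k' i j) as [-> ->]; auto.
Qed.

Definition reach (m m' : mode) : Prop := m' = m \/ (m <> MA /\ m' = MN).

Lemma st_not_ans : forall R, (forall r a, R r a -> ~ is_answer r) ->
  forall m t t', st R m t t' -> ~ is_answer t.
Proof.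
  intros R D2 m t t' H; induction H; intro Ha; try (inversion Ha; subst; auto; fail).
  eapply D2; eauto.
Qed.

Lemma st_det : forall R,
  (forall r a b, R r a -> R r b -> a = b) ->
  (forall r a, R r a -> ~ is_answer r) ->
  (forall a t r', R (ES a t) r' -> ~ is_answer a) ->
  (forall t u r' t', R (App t u) r' -> st R MN t t' -> False) ->
  forall m t u1, st R m t u1 ->
  (forall m', reach m m' -> forall t u r' t', R (ES t u) r' -> st R m' t t' -> False) ->
  forall u2, st R m t u2 -> u1 = u2.
Proof.
  intros R D1 D2 D5 D4 m t u1 H1; induction H1; intros HD3 u2 H2.
  - inversion H2; subst.
    + eapply D1; eauto.
    + exfalso; eapply HD3; eauto. left; auto.
    + exfalso; eapply D5; eauto.
    + exfalso; eapply D4; eauto.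
  - inversion H2; subst.
    + exfalso; eapply HD3; eauto. left; auto.
    + f_equal. apply IHst; auto.
    + exfalso; match goal with H : st R _ ?x _, Ha : is_answer ?x |- _ => exact (st_not_ans R D2 _ _ _ H Ha) end.
  - inversion H2; subst.
    + exfalso; eapply D5; eauto.
    + exfalso; match goal with H : st R _ ?x _, Ha : is_answer ?x |- _ => exact (st_not_ans R D2 _ _ _ H Ha) end.
    + f_equal. apply IHst; auto.
  - inversion H2; subst.
    + exfalso; eapply D4; eauto.
    + f_equal. apply IHst; auto.
      intros m' [->|[_ ->]]; apply HD3; right; auto.
Qed.

Lemma clos_st : forall C R m t u, (forall c, C c -> ctxm m c) -> closure C R t u -> st R m t u.
Proof.
  intros C R m t u HC (c & r & r' & Hc & Hr & -> & ->). apply st_plug; auto.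
Qed.

Lemma m_stuck : forall s b x, is_S s -> st root_m MN (plug s (Lam b)) x -> False.
Proof.
  intros s b x Hs; revert x; induction Hs; intros x H; simpl in H.
  - inversion H; subst. match goal with H0 : root_m _ _ |- _ => destruct H0 as (?&?&?&_&?E&_); discriminate end.
  - inversion H; subst.
    + match goal with H0 : root_m _ _ |- _ => destruct H0 as (?&?&?&_&?E&_); discriminate end.
    + eapply IHHs; eauto.
    + congruence.
Qed.

Lemma det_ym : deterministic ym.
Proof.
  intros x y1 y2 H1 H2.
  apply (clos_st _ _ MY) in H1; [|apply Y_ctxm].
  apply (clos_st _ _ MY) in H2; [|apply Y_ctxm].
  eapply st_det; eauto.
  - intros r a b (s & b0 & u & Hs & -> & ->) (s' & b0' & u' & Hs' & E & ->).
    injection E; intros; subst.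
    destruct (S_uniq s s' (Lam b0) (Lam b0')) as [-> E']; auto;
      try (eexists; eauto). injection E'; intros; subst; auto.
  - intros r a (s & b0 & u & Hs & -> & ->) Ha; inversion Ha.
  - intros a t r' (s & b0 & u & Hs & E & ->); discriminate.
  - intros t u r' t' (s & b0 & u0 & Hs & E & ->) Hst. injection E; intros; subst.
    eapply m_stuck; eauto.
  - intros m' _ t u r' t' (s & b0 & u0 & Hs & E & ->); discriminate.
Qed.

Lemma e_det : forall K, (forall k, K k -> ctxm MY k) ->
  forall r a b, root_e K r a -> root_e K r b -> a = b.
Proof.
  intros K HK r a b (k & u & Hk & -> & ->) (k' & u' & Hk' & E & ->).
  injection E; intros; subst.
  destruct (var_uniq k MY k' (depth k) (depth k')) as [-> _]; auto.
Qed.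

Lemma e_not_ans : forall K, (forall k, K k -> ctxm MY k) ->
  forall r a, root_e K r a -> ~ is_answer r.
Proof.
  intros K HK r a (k & u & Hk & -> & ->) Ha. inversion Ha; subst.
  eapply not_ans_var; eauto.
Qed.

Lemma e_D5 : forall K, (forall k, K k -> ctxm MY k) ->
  forall a t r', root_e K (ES a t) r' -> ~ is_answer a.
Proof.
  intros K HK a t r' (k & u & Hk & E & ->) Ha. injection E; intros; subst.
  eapply not_ans_var; eauto.
Qed.

Lemma e_D3 : forall K K' m, (forall k, K k -> ctxm MY k) ->
  (forall c k2 u2, ctxm m c -> K' k2 -> ctxm MY (ccomp c (CESL k2 u2))) ->
  forall t u r' t', root_e K (ES t u) r' -> st (root_e K') m t t' -> False.
Proof.
  intros K K' m HK HC t u r' t' (k & u0 & Hk & E & ->) Hst.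
  injection E; intros; subst.
  apply st_ctx in Hst. destruct Hst as (c & r & r'' & Hc & (k2 & u2 & Hk2 & -> & ->) & E2 & _).
  assert (E3 : plug k (Var (depth k)) = plug (ccomp c (CESL k2 u2)) (Var (depth k2))).
  { rewrite E2, plug_ccomp; reflexivity. }
  destruct (var_uniq k MY (ccomp c (CESL k2 u2)) (depth k) (depth k2)) as [E4 E5]; auto.
  rewrite E4, depth_ccomp in E5. simpl in E5. lia.
Qed.

Lemma det_yeAY : deterministic yeAY.
Proof.
  intros x y1 y2 H1 H2.
  apply (clos_st _ _ MA) in H1; [|apply A_ctxm].
  apply (clos_st _ _ MA) in H2; [|apply A_ctxm].
  assert (HK : forall k, is_Y k -> ctxm MY k) by apply Y_ctxm.
  eapply st_det; eauto.
  - apply e_det; auto.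
  - apply e_not_ans; auto.
  - apply e_D5; auto.
  - intros t0 u r' t' (k & u0 & _ & E & _); discriminate.
  - intros m' [->|[C _]]; [|congruence].
    apply (e_D3 is_Y is_Y MA); auto.
    intros c k2 u2 Hc Hk2. apply ccomp_A; auto. constructor; auto. discriminate.
Qed.

Lemma det_yeYN : deterministic yeYN.
Proof.
  intros x y1 y2 H1 H2.
  apply (clos_st _ _ MY) in H1; [|apply Y_ctxm].
  apply (clos_st _ _ MY) in H2; [|apply Y_ctxm].
  assert (HK : forall k, is_N k -> ctxm MY k).
  { intros k Hk. apply ctxm_MN_up; [apply N_ctxm; auto|discriminate]. }
  eapply st_det; eauto.
  - apply e_det; auto.
  - apply e_not_ans; auto.
  - apply e_D5; auto.
  - intros t0 u r' t' (k & u0 & _ & E & _); discriminate.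
  - intros m' Hm. apply (e_D3 is_N is_N m'); auto.
    intros c k2 u2 Hc Hk2. apply ctxm_MY with (m := m'). apply ccomp_N; auto.
    + destruct Hm as [->|[_ ->]]; discriminate.
    + constructor. apply N_ctxm; auto.
Qed.

Notation G := root_gcv.

Lemma value_shift : forall v d c, is_value v -> is_value (shift d c v).
Proof. intros v d c [b ->]; simpl; eexists; eauto. Qed.

Lemma G_shift : forall r r' d c, G r r' -> G (shift d c r) (shift d c r').
Proof.
  intros r r' d c (t0 & s & v & Hs & Hv & -> & ->).
  exists (shift d c t0), (shiftc d c s), (shift d (c + depth s) v).
  repeat split.
  - apply S_shiftc; auto.
  - apply value_shift; auto.
  - simpl. rewrite shift_plug. f_equal.
    replace (S c) with (c + 1) by lia. apply (shift_comm t0 d 1 0 c). lia.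
  - rewrite shift_plug, depth_shiftc. f_equal.
    apply shift_comm. lia.
Qed.

Ltac shift_destr a E :=
  destruct a; simpl in E; try (destruct (Nat.leb _ _)); try discriminate; injection E; intros.

Lemma G_shift_inv : forall a r' d c, G (shift d c a) r' -> exists b, r' = shift d c b /\ G a b.
Proof.
  intros a r' d c (t0 & s & v & Hs & Hv & E & ->).
  destruct a; simpl in E; try (destruct (Nat.leb _ _)); try discriminate.
  injection E; intros E2 E1.
  destruct (shift_inv a1 d c 0 t0) as (a0 & -> & ->); [lia|auto|].
  destruct (shift_plug_inv_S s Hs d c a2 v) as (s0 & v0 & Hs0 & -> & -> & -> & Hv0); auto.
  exists (plug s0 (shift (depth s0) 0 a0)). split.
  - rewrite shift_plug, depth_shiftc. f_equal. symmetry. apply shift_comm. lia.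
  - exists a0, s0, v0. repeat split; auto.
Qed.

Lemma G_det : forall r a b, G r a -> G r b -> a = b.
Proof.
  intros r a b (t0 & s & v & Hs & Hv & -> & ->) (t0' & s' & v' & Hs' & Hv' & E & ->).
  injection E; intros E2 E1. apply shift_inj in E1. subst.
  destruct (S_uniq s s' v v') as [-> ->]; auto.
Qed.

Lemma st_shift : forall m a b, st G m a b -> forall d c, st G m (shift d c a) (shift d c b).
Proof.
  intros m a b H; induction H; intros d c; simpl.
  - constructor. apply G_shift; auto.
  - apply st_esl; auto.
  - apply st_esr; auto. apply ans_shift; auto.
  - apply st_app; auto.
Qed.

Lemma st_shift_inv : forall m x b', st G m x b' -> forall a d c, x = shift d c a ->
  exists b, b' = shift d c b /\ st G m a b.
Proof.
  intros m x b' H; induction H; intros a0 d c E.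
  - subst. destruct (G_shift_inv a0 t' d c H) as (b & -> & Hb). exists b; split; auto. constructor; auto.
  - destruct a0; simpl in E; try (destruct (Nat.leb _ _)); try discriminate.
    injection E; intros E2 E1.
    destruct (IHst a0_1 d (S c) E1) as (b & -> & Hb).
    exists (ES b a0_2). subst. split; auto. apply st_esl; auto.
  - destruct a0; simpl in E; try (destruct (Nat.leb _ _)); try discriminate.
    injection E; intros E2 E1.
    destruct (IHst a0_2 d c E2) as (b & -> & Hb).
    exists (ES a0_1 b). subst. split; auto. apply st_esr; auto.
    eapply ans_shift_inv; eauto.
  - destruct a0; simpl in E; try (destruct (Nat.leb _ _)); try discriminate.
    injection E; intros E2 E1.
    destruct (IHst a0_1 d c E1) as (b & -> & Hb).
    exists (App b a0_2). subst. split; auto. apply st_app; auto.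
Qed.

Lemma st_plugS : forall m s x y, is_S s -> st G m x y -> st G m (plug s x) (plug s y).
Proof. intros m s x y Hs; induction Hs; simpl; intros; auto. apply st_esl; auto. Qed.

Lemma RL : forall m t1 t2 r1 t1', G (ES t1 t2) r1 -> st G m t1 t1' ->
  exists s, st G m r1 s /\ st G m (ES t1' t2) s.
Proof.
  intros m t1 t2 r1 t1' (t0 & s & v & Hs & Hv & E & ->) Hst.
  injection E; intros; subst.
  destruct (st_shift_inv m _ _ Hst t0 1 0 eq_refl) as (t0' & -> & Ht0).
  exists (plug s (shift (depth s) 0 t0')). split.
  - apply st_plugS; auto. apply st_shift; auto.
  - constructor. exists t0', s, v. repeat split; auto.
Qed.

Lemma K_lemma : forall m, m <> MN -> forall s, is_S s -> forall v w, is_value v ->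
  st G m (plug s v) w ->
  exists s2 v2, is_S s2 /\ is_value v2 /\ w = plug s2 v2 /\
    forall p, is_answer p ->
      st G m (plug s (shift (depth s) 0 p)) (plug s2 (shift (depth s2) 0 p)).
Proof.
  intros m Hm s Hs; induction Hs; intros v w Hv H; simpl in H.
  - destruct Hv as [b ->]. inversion H; subst.
    destruct H0 as (?&?&?&_&_&E&_). discriminate.
  - inversion H; subst.
    +
      destruct H0 as (q & s'' & v'' & Hs'' & Hv'' & E & ->).
      injection E; intros E2 E1. subst u.
      destruct (shift_plug_inv_S s Hs 1 0 q v (eq_sym E1) Hv) as (s0 & v0 & Hs0 & -> & -> & -> & Hv0).
      exists (ccomp s'' (shiftc (depth s'') 0 s0)), (shift (depth s'') (depth s0) v0).
      repeat split.
      * apply S_ccomp; auto. apply S_shiftc; auto.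
      * apply value_shift; auto.
      * rewrite plug_ccomp, shift_plug. reflexivity.
      * intros p Hp. simpl. rewrite depth_shiftc.
        replace (plug (shiftc 1 0 s0) (shift (S (depth s0)) 0 p))
          with (shift 1 0 (plug s0 (shift (depth s0) 0 p))).
        2:{ rewrite shift_plug. f_equal. simpl. apply shift_merge; lia. }
        replace (plug (ccomp s'' (shiftc (depth s'') 0 s0))
                   (shift (depth (ccomp s'' (shiftc (depth s'') 0 s0))) 0 p))
          with (plug s'' (shift (depth s'') 0 (plug s0 (shift (depth s0) 0 p)))).
        2:{ rewrite plug_ccomp, shift_plug, depth_ccomp, depth_shiftc. f_equal. f_equal.
            simpl. rewrite shift_merge by lia. reflexivity. }
        constructor. eexists _, s'', v''. repeat split; auto.
    +
      destruct (IHHs v t' Hv H4) as (s2 & v2 & Hs2 & Hv2 & -> & Hp).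
      exists (CESL s2 u), v2. repeat split; auto.
      * constructor; auto.
      * intros p Hpa. simpl. apply st_esl.
        specialize (Hp (shift 1 0 p) (ans_shift _ _ _ Hpa)).
        rewrite !shift_merge in Hp by lia.
        replace (S (depth s)) with (depth s + 1) by lia.
        replace (S (depth s2)) with (depth s2 + 1) by lia. exact Hp.
    +
      exists (CESL s t'), v. repeat split; auto.
      * constructor; auto.
      * intros p Hpa. simpl. apply st_esr; auto.
        eapply ansS2; eauto. apply ans_shift; auto.
Qed.

Lemma RR : forall m t1 t2 r1 t2', m <> MN -> G (ES t1 t2) r1 -> is_answer t1 -> st G m t2 t2' ->
  exists s, st G m r1 s /\ st G m (ES t1 t2') s.
Proof.
  intros m t1 t2 r1 t2' Hm (t0 & s & v & Hs & Hv & E & ->) Ha Hst.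
  injection E; intros; subst.
  destruct (K_lemma m Hm s Hs v t2' Hv Hst) as (s2 & v2 & Hs2 & Hv2 & -> & Hp).
  exists (plug s2 (shift (depth s2) 0 t0)). split.
  - apply Hp. eapply ans_shift_inv; eauto.
  - constructor. exists t0, s2, v2. repeat split; auto.
Qed.

Lemma ans_pres : forall m a a', st G m a a' -> is_answer a -> is_answer a'.
Proof.
  intros m a a' H; induction H; intros Ha.
  - destruct H as (t0 & s & v & Hs & Hv & -> & ->). inversion Ha; subst.
    eapply ansS2; eauto. apply ans_shift. eapply ans_shift_inv; eauto.
  - inversion Ha; subst; constructor; auto.
  - inversion Ha; subst; constructor; auto.
  - inversion Ha.
Qed.

Lemma swap_join : forall m u1 u2,
  (u1 = u2 \/ exists s, st G m u1 s /\ st G m u2 s) ->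
  (u2 = u1 \/ exists s, st G m u2 s /\ st G m u1 s).
Proof. intros m u1 u2 [->|(s & H1 & H2)]; auto. right; eauto. Qed.

Theorem gcv_dia : forall m t u1, st G m t u1 -> forall u2, st G m t u2 ->
  u1 = u2 \/ exists s, st G m u1 s /\ st G m u2 s.
Proof.
  intros m t u1 H1; induction H1; intros u2 H2.
  - inversion H2; subst.
    + left. eapply G_det; eauto.
    + right. eapply RL; eauto.
    + right. eapply RR; eauto.
    + match goal with H3 : G (App _ _) _ |- _ => destruct H3 as (?&?&?&_&_&E&_); discriminate end.
  - inversion H2; subst.
    + apply swap_join. right. eapply RL; eauto.
    + destruct (IHst _ H5) as [->|(s & Ha & Hb)]; auto.
      right. exists (ES s u). split; apply st_esl; auto.
    + right. exists (ES t' t'0). split.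
      * apply st_esr; auto. eapply ans_pres; eauto.
      * apply st_esl; auto.
  - inversion H2; subst.
    + apply swap_join. right. eapply RR; eauto.
    + right. exists (ES t'0 t'). split.
      * apply st_esl; auto.
      * apply st_esr; auto. eapply ans_pres; eauto.
    + destruct (IHst _ H9) as [->|(s & Ha & Hb)]; auto.
      right. exists (ES a s). split; apply st_esr; auto.
  - inversion H2; subst.
    + match goal with H3 : G _ _ |- _ => destruct H3 as (?&?&?&_&_&E&_); discriminate end.
    + match goal with H6 : st G MN t _ |- _ => destruct (IHst _ H6) as [->|(s & Ha & Hb)]; auto end.
      right. exists (App s u). split; apply st_app; auto.
Qed.

Lemma st_clos : forall t u, st G MY t u -> ygcv t u.
Proof.
  intros t u H. apply st_ctx in H. destruct H as (c & r & r' & Hc & Hr & -> & ->).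
  exists c, r, r'. repeat split; auto. apply ctxm_Y; auto.
Qed.

Lemma dia_ygcv : diamond ygcv.
Proof.
  intros t u1 u2 H1 H2.
  apply (clos_st _ _ MY) in H1; [|apply Y_ctxm].
  apply (clos_st _ _ MY) in H2; [|apply Y_ctxm].
  destruct (gcv_dia MY t u1 H1 u2 H2) as [->|(s & Ha & Hb)]; auto.
  right. exists s. split; apply st_clos; auto.
Qed.

Theorem proposition11p4 :
  deterministic ym /\ deterministic yeAY /\ deterministic yeYN /\ diamond ygcv.
Proof.
  split; [apply det_ym|split; [apply det_yeAY|split; [apply det_yeYN|apply dia_ygcv]]].
Qed.
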